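(* Let $G$ be a triangle-free graph and $n\ge 1$. Then every induced subgraph of $KB(G)$ isomorphic to $K_{1,n}$ is contained in a (not necessarily induced) subgraph of $KB(G)$ isomorphic to $(D_n)^2$ or to $(D_n^-)^2$.
   Context: All graphs are finite and simple. A biclique of a graph $G$ is a set $P\subseteq V(G)$ such that the induced subgraph $G[P]$ is a complete bipartite graph with both parts nonempty, and $P$ is inclusion-maximal with this property. The biclique graph $KB(G)$ has the set of bicliques of $G$ as vertex set, two distinct bicliques being adjacent iff they intersect. For a graph $H$, the square $H^2$ has vertex set $V(H)$, two distinct vertices being adjacent iff their distance in $H$ is at most $2$. $D_n$ is the graph with vertex set $\{v,u_1,\dots,u_n,w_1,\dots,w_n\}$ and edge set $\{vu_i:1\le i\le n\}\cup\{u_iw_i:1\le i\le n\}$, and $D_n^-$ is the graph $D_n-w_n$ obtained by deleting the vertex $w_n$. *)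

(* Defs.v *)
From mathcomp Require Import all_boot.
Unset Strict Implicit. Unset Printing Implicit Defensive.

(* A finite simple graph: vertex type T : finType, edge relation e : rel T,
   assumed symmetric and irreflexive in the theorem. *)

Definition triangle_free {T : finType} (e : rel T) : Prop :=
  forall x y z : T, ~ [&& e x y, e y z & e x z].

Definition complete_bip {T : finType} (e : rel T) (P : {set T}) : Prop :=
  exists X Y : {set T},
    [/\ X != set0, Y != set0, [disjoint X & Y], X :|: Y = P &
     [/\ forall x y, x \in X -> y \in Y -> e x y,
         forall x y, x \in X -> y \in X -> ~~ e x y
       & forall x y, x \in Y -> y \in Y -> ~~ e x y]].

Definition biclique {T : finType} (e : rel T) (P : {set T}) : Prop :=
  complete_bip e P /\ forall Q : {set T}, P \proper Q -> ~ complete_bip e Q.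

Definition KBadj {T : finType} (P Q : {set T}) : bool :=
  (P != Q) && (P :&: Q != set0).

(* The graph D_n: None = v, Some (inl i) = u_i, Some (inr i) = w_i
   (indices 0..n-1 instead of 1..n). *)
Definition Dvert (n : nat) : finType := option ('I_n + 'I_n)%type.

Definition Dadj {n : nat} (x y : Dvert n) : bool :=
  match x, y with
  | None, Some (inl _) | Some (inl _), None => true
  | Some (inl i), Some (inr j) | Some (inr j), Some (inl i) => i == j
  | _, _ => false
  end.

(* Vertex set: full = true gives D_n, full = false gives D_n^- = D_n - w_n
   (w_n is Some (inr i) with val i = n - 1). *)
Definition Dvs (n : nat) (full : bool) (x : Dvert n) : bool :=
  match x with
  | Some (inr j) => full || (val j != n.-1)
  | _ => true
  end.

Definition Dsq (n : nat) (full : bool) (x y : Dvert n) : bool :=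
  [&& Dvs n full x, Dvs n full y, x != y &
      Dadj x y || [exists z, [&& Dvs n full z, Dadj x z & Dadj z y]]].

(* Main.v *)
Require Import Defs.
From mathcomp Require Import all_boot.

Module GenM.
Local Set Implicit Arguments.

Section Gen.
Variables (T : finType) (e : rel T).
Implicit Types (A B X Y P Q R : {set T}) (x y z : T).
Hypotheses (e_sym : symmetric e) (e_irr : irreflexive e) (e_tf : triangle_free e).

Lemma disjointP (A B : {set T}) : reflect (forall x, x \in A -> x \in B -> False) [disjoint A & B].
Proof.
rewrite disjoint_subset; apply: (iffP subsetP) => H x xA.
  by move: (H x xA); rewrite inE => /negP.
by rewrite inE; apply/negP; apply: H.
Qed.

Definition cn (A : {set T}) : {set T} := [set z | [forall a in A, e a z]].

Lemma cnP A z : reflect (forall a, a \in A -> e a z) (z \in cn A).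
Proof. rewrite inE; exact: forall_inP. Qed.

Lemma cn_anti A B : A \subset B -> cn B \subset cn A.
Proof. move=> sAB; apply/subsetP=> z /cnP H; apply/cnP=> a aA; apply: H; exact: (subsetP sAB). Qed.

Lemma cn_indep Y z1 z2 : Y != set0 -> z1 \in cn Y -> z2 \in cn Y -> ~~ e z1 z2.
Proof.
case/set0Pn=> y yY /cnP H1 /cnP H2; apply/negP=> h.
by apply: (e_tf y z1 z2); rewrite (H1 y yY) (H2 y yY) h.
Qed.

Definition sides (R X Y : {set T}) : Prop :=
  [/\ X != set0, Y != set0, R = X :|: Y, Y = cn X & X = cn Y].

Lemma sides_sym R X Y : sides R X Y -> sides R Y X.
Proof. by case=> h1 h2 h3 h4 h5; split=> //; rewrite setUC. Qed.

Lemma closeY P X Y : (forall Q, P \proper Q -> ~ complete_bip e Q) ->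
  X != set0 -> Y != set0 -> [disjoint X & Y] -> X :|: Y = P ->
  (forall x y, x \in X -> y \in Y -> e x y) ->
  (forall x y, x \in X -> y \in X -> ~~ e x y) ->
  (forall x y, x \in Y -> y \in Y -> ~~ e x y) -> Y = cn X.
Proof.
move=> Hmax nX nY dXY UP cr iX iY; apply/setP=> z; apply/idP/idP.
  by move=> zY; apply/cnP=> a aX; apply: cr.
move=> /cnP zc; apply/negPn/negP=> zY.
have zX : z \notin X by apply/negP=> zX; move: (zc z zX); rewrite e_irr.
case/set0Pn: (nX) => x0 x0X.
apply: (Hmax (X :|: (z |: Y))).
  rewrite properE; apply/andP; split.
    by rewrite -UP; apply/setUS/subsetP=> w wY; rewrite !inE wY orbT.
  apply/subsetPn; exists z; first by rewrite !inE eqxx orbT.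
  by rewrite -UP inE (negbTE zX) (negbTE zY).
exists X, (z |: Y); split=> //.
- by apply/set0Pn; exists z; rewrite !inE eqxx.
- apply/disjointP=> w wX; rewrite !inE => /orP[/eqP ew|wY].
    by move: zX; rewrite -ew wX.
  by move/disjointP: dXY => /(_ w wX); apply.
- split.
  + move=> x y xX; rewrite !inE => /orP[/eqP->|]; [exact: zc | exact: cr].
  + exact: iX.
  + move=> x y; rewrite !inE => /orP[/eqP->|xY] /orP[/eqP->|yY].
    * by rewrite e_irr.
    * apply/negP=> hh; apply: (e_tf x0 y z); by rewrite (cr x0 y x0X yY) (e_sym y z) hh (zc x0 x0X).
    * apply/negP=> hh; apply: (e_tf x0 x z); by rewrite (cr x0 x x0X xY) hh (zc x0 x0X).
    * exact: iY.
Qed.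

Lemma biclique_sides P : biclique e P -> exists X Y, sides P X Y.
Proof.
case=> [[X [Y [nX nY dXY UP [cr iX iY]]]] Hmax].
exists X, Y; split=> //.
  exact: (closeY Hmax).
apply: (closeY Hmax) => //; first by rewrite disjoint_sym.
  by rewrite setUC.
by move=> x y xY yX; rewrite e_sym; apply: cr.
Qed.

Lemma sides_aux X Y X' Y' x0 :
  Y = cn X -> X = cn Y -> Y != set0 ->
  (forall x y, x \in X' -> y \in Y' -> e x y) ->
  (forall x y, x \in X' -> y \in X' -> ~~ e x y) ->
  (forall x y, x \in Y' -> y \in Y' -> ~~ e x y) ->
  X :|: Y \subset X' :|: Y' -> x0 \in X -> x0 \in X' ->
  X' :|: Y' \subset X :|: Y.
Proof.
move=> hY hX nY cr iX iY sub x0X x0X'.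
have YY : forall y, y \in Y -> y \in Y'.
  move=> y yY; have : y \in X' :|: Y' by apply: (subsetP sub); rewrite inE yY orbT.
  rewrite inE => /orP[yX'|//].
  have : e x0 y by move: yY; rewrite hY => /cnP; apply.
  by rewrite (negbTE (iX _ _ x0X' yX')).
case/set0Pn: nY => y0 y0Y.
have XX : forall x, x \in X -> x \in X'.
  move=> x xX; have : x \in X' :|: Y' by apply: (subsetP sub); rewrite inE xX.
  rewrite inE => /orP[//|xY'].
  have : e x y0 by move: y0Y; rewrite hY => /cnP; apply.
  by rewrite (negbTE (iY _ _ xY' (YY _ y0Y))).
apply/subsetP=> z; rewrite !inE => /orP[zX'|zY'].
  by apply/orP; left; rewrite hX; apply/cnP=> a aY; rewrite e_sym; apply: cr => //; apply: YY.
by apply/orP; right; rewrite hY; apply/cnP=> a aX; apply: cr => //; apply: XX.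
Qed.

Lemma sides_biclique P X Y : sides P X Y -> biclique e P.
Proof.
case=> nX nY -> hY hX; split.
  exists X, Y; split=> //.
  - apply/disjointP=> z zX zY; move: zY; rewrite hY => /cnP /(_ z zX); by rewrite e_irr.
  - split.
    + by move=> x y xX; rewrite hY => /cnP; apply.
    + by rewrite hX => x y; apply: cn_indep.
    + by rewrite hY => x y; apply: cn_indep.
move=> Q; rewrite properE => /andP[sPQ nQP] [X' [Y' [nX' nY' dXY UQ [cr iX iY]]]].
case/set0Pn: (nX) => x0 x0X.
have x0Q : x0 \in Q by apply: (subsetP sPQ); rewrite inE x0X.
move: (sPQ); rewrite -UQ => sub.
move: x0Q; rewrite -UQ inE => /orP[x0X'|x0Y'].
  by move: nQP; rewrite -UQ (sides_aux hY hX nY cr iX iY sub x0X x0X').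
have cr' : forall x y, x \in Y' -> y \in X' -> e x y by move=> x y a b; rewrite e_sym; apply: cr.
move: sub; rewrite [X' :|: _]setUC => sub.
by move: nQP; rewrite -UQ [X' :|: _]setUC (sides_aux hY hX nY cr' iY iX sub x0X x0Y').
Qed.

Definition covers (P R : {set T}) : Prop := exists X Y, sides R X Y /\ X \subset P.

Lemma core_aux A B X Y x0 :
  sides (A :|: B) A B -> Y = cn X -> X = cn Y -> Y != set0 ->
  X \subset A :|: B -> x0 \in X -> x0 \in A -> B \subset Y.
Proof.
case=> nA nB _ hB hA hY hX nY sub x0X x0A.
apply/subsetP=> b bB; rewrite hY; apply/cnP=> x xX.
have := subsetP sub x xX; rewrite inE => /orP[xA|xB].
  by move: bB; rewrite hB => /cnP; apply.
have : e x0 x by move: xB; rewrite hB => /cnP; apply.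
by rewrite hX in x0X xX; rewrite (negbTE (cn_indep nY x0X xX)).
Qed.

Lemma core P A B X Y R : sides P A B -> sides R X Y -> X \subset P ->
  B \subset Y \/ A \subset Y.
Proof.
move=> sP [nX nY _ hY hX] sub.
case/set0Pn: (nX) => x0 x0X.
have := subsetP sub x0 x0X; case: (sP) => _ _ UP _ _.
rewrite UP in sub sP *; rewrite inE => /orP[x0A|x0B].
  by left; apply: (core_aux sP hY hX nY sub x0X x0A).
right; apply: (core_aux _ hY hX nY _ x0X x0B).
  by rewrite setUC; apply: sides_sym.
by rewrite setUC.
Qed.

Lemma cover_sym P R : biclique e P -> covers P R -> covers R P.
Proof.
move=> /biclique_sides [A [B sP]] [X [Y [sR sub]]].
have UR : R = X :|: Y by case: sR.
case: (core sP sR sub) => h.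
  exists B, A; split; first exact: sides_sym.
  by rewrite UR; apply: subset_trans h _; apply: subsetUr.
exists A, B; split=> //.
by rewrite UR; apply: subset_trans h _; apply: subsetUr.
Qed.

Lemma side_sub R X Y X' Y' y : sides R X Y -> sides R X' Y' -> y \in X' -> y \in Y ->
  Y \subset X'.
Proof.
case=> nX nY UR hY hX [nX' nY' UR' hY' hX'] yX' yY.
apply/subsetP=> z zY.
have : z \in R by rewrite UR inE zY orbT.
rewrite UR' inE => /orP[//|zY'].
have : e y z by move: zY'; rewrite hY' => /cnP; apply.
by rewrite hY in yY zY; rewrite (negbTE (cn_indep nX yY zY)).
Qed.

Lemma cover_meet P Q R : biclique e P -> covers P R -> covers Q R -> P :&: Q != set0.
Proof.
move=> bP [X [Y [sR sP]]] [X' [Y' [sR' sQ]]].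
have [nX' _ UR' _ _] := sR'.
have [_ _ UR _ _] := sR.
case/set0Pn: nX' => z zX'.
have : z \in R by rewrite UR' inE zX'.
rewrite UR inE => /orP[zX|zY].
  by apply/set0Pn; exists z; rewrite inE (subsetP sP z zX) (subsetP sQ z zX').
have YQ := subset_trans (side_sub sR sR' zX' zY) sQ.
have [A [B sPs]] := biclique_sides bP.
have [nA nB UP _ _] := sPs.
case: (core sPs sR sP) => h.
  case/set0Pn: nB => b bB; apply/set0Pn; exists b.
  by rewrite inE UP inE bB orbT (subsetP YQ) // (subsetP h).
case/set0Pn: nA => b bB; apply/set0Pn; exists b.
by rewrite inE UP inE bB (subsetP YQ) // (subsetP h).
Qed.

Definition Nb x : {set T} := [set z | e x z].
Definition Bs x : {set T} := cn (Nb x) :|: Nb x.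

Lemma cn1 x : Nb x = cn [set x].
Proof.
apply/setP=> z; rewrite !inE; apply/idP/idP.
  by move=> h; apply/forall_inP=> a; rewrite inE => /eqP->.
by move/forall_inP; apply; rewrite inE.
Qed.

Lemma sub_cncn A : A \subset cn (cn A).
Proof. apply/subsetP=> a aA; apply/cnP=> z /cnP h; rewrite e_sym; exact: h. Qed.

Lemma cn3 A : cn (cn (cn A)) = cn A.
Proof.
apply/eqP; rewrite eqEsubset; apply/andP; split.
  by apply: cn_anti; apply: sub_cncn.
exact: sub_cncn.
Qed.

Lemma Bs_sides x : Nb x != set0 -> sides (Bs x) (cn (Nb x)) (Nb x).
Proof.
move=> nN; split=> //.
- apply/set0Pn; exists x; apply/cnP=> a; rewrite inE e_sym; done.
- by rewrite cn1 cn3.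
Qed.

Lemma Bs_in x : x \in Bs x.
Proof. by rewrite inE; apply/orP; left; apply/cnP=> a; rewrite inE e_sym. Qed.

Lemma star_covers R X Y x : sides R X Y -> x \in R -> covers (Bs x) R /\ Nb x != set0.
Proof.
move=> sR; have [nX nY UR hY hX] := sR.
rewrite UR inE => /orP[xX|xY].
  have sub : Y \subset Nb x by apply/subsetP=> y; rewrite hY inE => /forall_inP H; rewrite inE; exact: H.
  split; last by case/set0Pn: nY => y yY; apply/set0Pn; exists y; apply: (subsetP sub).
  exists Y, X; split; first exact: sides_sym.
  by apply: subset_trans sub _; apply: subsetUr.
have sub : X \subset Nb x by apply/subsetP=> y; rewrite hX inE => /forall_inP H; rewrite inE; exact: H.
split; last by case/set0Pn: nX => y yY; apply/set0Pn; exists y; apply: (subsetP sub).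
exists X, Y; split=> //.
by apply: subset_trans sub _; apply: subsetUr.
Qed.

End Gen.

End GenM.
Import GenM.

Definition sw {n} (k l i : 'I_n) := if i == k then l else if i == l then k else i.

Lemma swK n (k l : 'I_n) : involutive (sw k l).
Proof.
move=> i; rewrite /sw.
case: (eqVneq i k) => [->|ik]; first by rewrite eqxx; case: (eqVneq l k) => [->|lk]; rewrite ?eqxx.
case: (eqVneq i l) => [->|il]; first by rewrite eqxx.
by rewrite (negbTE ik) (negbTE il).
Qed.

Lemma swR n (k l : 'I_n) : sw k l l = k.
Proof. by rewrite /sw; case: (eqVneq l k) => [->|lk]; rewrite ?eqxx. Qed.

Theorem corollary4 (T : finType) (e : rel T)
  (e_sym : symmetric e) (e_irr : irreflexive e) (e_tf : triangle_free e)
  (n : nat) (hn : 1 <= n)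
  (c : {set T}) (L : 'I_n -> {set T}) :
  biclique e c -> (forall i, biclique e (L i)) -> injective L ->
  (forall i, KBadj c (L i)) ->
  (forall i j, i != j -> ~~ KBadj (L i) (L j)) ->
  exists (full : bool) (g : Dvert n -> {set T}),
    [/\ forall x, Dvs n full x -> biclique e (g x),
        forall x y, Dvs n full x -> Dvs n full y -> g x = g y -> x = y,
        forall x y, Dsq n full x y -> KBadj (g x) (g y)
      & forall i, exists x y, Dsq n full x y /\ g x = c /\ g y = L i].
Proof.
move=> bc bL Linj Hc HL.
case: n hn L bL Linj Hc HL => [//|n'] _ L bL Linj Hc HL.
pose last := @ord_max n'.
have Hp : forall i, exists p, p \in c :&: L i.
  by move=> i; move: (Hc i); rewrite /KBadj => /andP[_ /set0Pn].
pose p i := xchoose (Hp i).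
have pc : forall i, p i \in c by move=> i; have := xchooseP (Hp i); rewrite inE => /andP[].
have pL : forall i, p i \in L i by move=> i; have := xchooseP (Hp i); rewrite inE => /andP[].
pose m i := Bs T e (p i).
have [X [Y sc]] := biclique_sides e_sym e_irr e_tf bc.
have sL : forall i, exists X Y, sides e (L i) X Y.
  by move=> i; apply: (biclique_sides e_sym e_irr e_tf).
have mcov : forall i, covers e (m i) c by move=> i; case: (star_covers sc (pc i)).
have mb : forall i, biclique e (m i).
  move=> i; case: (star_covers sc (pc i)) => _ nN.
  exact: (sides_biclique e_sym e_irr e_tf (Bs_sides _ e_sym _ nN)).
have mLcov : forall i, covers e (m i) (L i).
  by move=> i; have [A [B sA]] := sL i; case: (star_covers sA (pL i)).
have pm : forall i, p i \in m i by move=> i; apply: (Bs_in _ e_sym).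
have Ldisj : forall i j, i != j -> L i :&: L j = set0.
  move=> i j ij; move: (HL i j ij); rewrite /KBadj.
  have -> : L i != L j by apply/eqP=> /Linj /eqP; rewrite (negbTE ij).
  by move/negPn/eqP.
pose K := [set i | (m i == c) || (m i == L i)].
have Kcov : forall i, i \in K -> covers e (L i) c.
  move=> i; rewrite inE => /orP[/eqP h|/eqP h].
    by apply: (cover_sym e_sym e_irr e_tf bc); rewrite -h.
  by rewrite -h.
have Kuniq : forall i j, i \in K -> j \in K -> i = j.
  move=> i j iK jK; apply/eqP/negP=> /negP ij.
  move: (cover_meet e_sym e_irr e_tf (bL i) (Kcov i iK) (Kcov j jK)).
  by rewrite Ldisj // eqxx.
have [k kK] : exists k, forall i, i \in K -> i = k.
  case: (pickP (mem K)) => [k0 Hk0|none]; first by exists k0 => i iK; apply: Kuniq.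
  by exists last => i iK; move: (none i); rewrite /= iK.
pose full := k \notin K.
pose s := sw k last.
have sK : involutive s by apply: swK.
have notK : forall i, ~~ (~~ full && (i == last)) -> s i \notin K.
  move=> i; apply: contraNN => siK.
  have ek := kK _ siK.
  have -> : i = last by rewrite -(sK i) ek /s /sw eqxx.
  by rewrite /full -ek siK eqxx.
have D1 : forall t, c != L t by move=> t; move: (Hc t) => /andP[].
have D2 : forall t, t \notin K -> m t != c.
  by move=> t; apply: contraNN; rewrite inE => ->.
have D3 : forall s1 t, s1 != t -> m s1 != m t.
  move=> s1 t st; apply/negP=> /eqP h.
  have c1 := cover_sym e_sym e_irr e_tf (mb s1) (mLcov s1).
  have c2 := cover_sym e_sym e_irr e_tf (mb s1) (eq_ind_r (fun M => covers e M (L t)) (mLcov t) h).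
  move: (cover_meet e_sym e_irr e_tf (bL s1) c1 c2).
  by rewrite Ldisj // eqxx.
have D4 : forall s1 t, s1 \notin K -> m s1 != L t.
  move=> s1 t s1K; case: (eqVneq s1 t) => [<-|st].
    by apply: contraNN s1K; rewrite inE => ->; rewrite orbT.
  apply/eqP=> h; have := Ldisj _ _ st; move/setP/(_ (p s1)).
  by rewrite !inE pL -h pm.
have D6 : forall s1 t, s1 != t -> L s1 != L t.
  by move=> s1 t; apply: contraNN => /eqP /Linj ->.
have M1 : forall t, c :&: L t != set0 by move=> t; move: (Hc t) => /andP[].
have M2 : forall t, c :&: m t != set0 by move=> t; apply/set0Pn; exists (p t); rewrite inE pc pm.
have M3 : forall t, m t :&: L t != set0 by move=> t; apply/set0Pn; exists (p t); rewrite inE pL pm.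
have M4 : forall s1 t, m s1 :&: m t != set0.
  by move=> s1 t; apply: (cover_meet e_sym e_irr e_tf (mb s1) (mcov s1) (mcov t)).
have M5 : forall s1, k \in K -> m s1 :&: L k != set0.
  by move=> s1 kk; apply: (cover_meet e_sym e_irr e_tf (mb s1) (mcov s1) (Kcov k kk)).
pose g (x : Dvert n'.+1) := match x with
  | None => c
  | Some (inl i) => if ~~ full && (i == last) then L (s i) else m (s i)
  | Some (inr i) => L (s i) end.
have sinj : injective s by apply: (can_inj sK).
have lastE : forall i : 'I_n'.+1, (val i != n') = (i != last) by [].
have inj : forall x y, Dvs n'.+1 full x -> Dvs n'.+1 full y -> g x = g y -> x = y.
  move=> x y; case: x => [[i|i]|]; case: y => [[j|j]|] //= Hx Hy.
  - case: ifP => Ci; case: ifP => Cj.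
    + by move: Ci Cj => /andP[_ /eqP->] /andP[_ /eqP->].
    + by move=> h; move: (D4 _ (s i) (notK j (negbT Cj))); rewrite h eqxx.
    + by move=> h; move: (D4 _ (s j) (notK i (negbT Ci))); rewrite h eqxx.
    + move=> h; case: (eqVneq (s i) (s j)) => [/sinj -> //|ne].
      by move: (D3 _ _ ne); rewrite h eqxx.
  - case: ifP => Ci.
      move/Linj/sinj => eij; move: Ci Hy; rewrite eij => /andP[/negbTE -> /eqP ->].
      by rewrite /= eqxx.
    by move=> h; move: (D4 _ (s j) (notK i (negbT Ci))); rewrite h eqxx.
  - case: ifP => Ci.
      by move=> h; move: (D1 (s i)); rewrite h eqxx.
    by move=> h; move: (D2 _ (notK i (negbT Ci))); rewrite h eqxx.
  - case: ifP => Cj.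
      move/Linj/sinj => eij; move: Cj Hx; rewrite eij => /andP[/negbTE -> /eqP ->].
      by rewrite /= eqxx.
    by move=> h; move: (D4 _ (s i) (notK j (negbT Cj))); rewrite h eqxx.
  - by move/Linj/sinj ->.
  - by move=> h; move: (D1 (s i)); rewrite h eqxx.
  - case: ifP => Cj.
      by move=> h; move: (D1 (s j)); rewrite h eqxx.
    by move=> h; move: (D2 _ (notK j (negbT Cj))); rewrite h eqxx.
  - by move=> h; move: (D1 (s j)); rewrite h eqxx.
have kKf : forall i, ~~ full && (i == last) -> s i = k /\ k \in K.
  move=> i /andP[/negPn kk /eqP ->]; split=> //; exact: swR.
exists full, g; split.
- by case=> [[i|i]|] _ //=; case: ifP.
- exact: inj.
- move=> x y; rewrite /Dsq => /and4P[Hx Hy xy Ha].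
  rewrite /KBadj; apply/andP; split.
    by apply/eqP=> h; move: xy; rewrite (inj x y Hx Hy h) eqxx.
  case: x Hx xy Ha => [[i|i]|] Hx xy Ha; case: y Hy xy Ha => [[j|j]|] Hy xy Ha /=.
  + case: ifP => Ci; case: ifP => Cj.
    * by move: Ci Cj xy => /andP[_ /eqP->] /andP[_ /eqP->]; rewrite eqxx.
    * by have [-> kk] := kKf _ Ci; rewrite setIC; apply: M5.
    * by have [-> kk] := kKf _ Cj; apply: M5.
    * exact: M4.
  + have eij : i = j.
      move: Ha => /orP[/eqP//|/existsP[[[z|z]|]]] /=; by rewrite ?andbF.
    subst j; case: ifP => Ci; last exact: M3.
    by move: Ci Hy => /andP[/negbTE -> /eqP ->]; rewrite /= eqxx.
  + by case: ifP => Ci; rewrite setIC ?M1 ?M2.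
  + have eij : i = j.
      move: Ha => /orP[/eqP//|/existsP[[[z|z]|]]] /=; by rewrite ?andbF.
    subst j; case: ifP => Ci; last by rewrite setIC M3.
    by move: Ci Hx => /andP[/negbTE -> /eqP ->]; rewrite /= eqxx.
  + have eij : i = j.
      move: Ha => /orP[//|/existsP[[[z|z]|]]] /=; rewrite ?andbF //.
      by case/andP=> /eqP <- /eqP.
    by move: xy; rewrite eij eqxx.
  + by rewrite setIC M1.
  + by case: ifP => Ci; rewrite ?M1 ?M2.
  + exact: M1.
  + by move: xy; rewrite eqxx.
- move=> i; exists None.
  case C: (~~ full && (s i == last)).
    exists (Some (inl (s i))); split=> //; split=> //=.
    by rewrite C sK.
  exists (Some (inr (s i))); split; last by split=> //=; rewrite sK.
  rewrite /Dsq /=; apply/andP; split.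
    by rewrite lastE; move: C; case: (full) => //= ->.
  apply/existsP; exists (Some (inl (s i))); by rewrite /= eqxx.
Qed.
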